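(* For every positive integer $n$, the number of circular permutations of $[n]=\{1,2,\ldots,n\}$ that avoid the pattern $1234$ equals $2^{n}+1-2n-\binom{n}{3}$.
   Context: A circular permutation of $[n]$ is an arrangement of $1,2,\ldots,n$ clockwise around a circle, two arrangements being identified if they differ by a rotation. Equivalently, it can be represented uniquely as a linear permutation $\pi_1\pi_2\cdots\pi_n$ of $[n]$ with $\pi_n=n$, whose rotations all represent the same circular permutation. The reduced form of a sequence of distinct positive integers is obtained by replacing its smallest entry by $1$, its next smallest by $2$, and so on; a pattern is such a reduced form. An occurrence of a pattern $\tau$ of length $m$ in a circular permutation $\pi$ is a sequence of $m$ letters of $\pi$ read in clockwise order and lying within one revolution (i.e., a subsequence of some rotation of the linear representation) whose reduced form is $\tau$; $\pi$ avoids $\tau$ if it has no occurrence of $\tau$. Here $\binom{n}{3}=0$ for $n<3$. *)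

(* Defs.v *)
From mathcomp Require Import all_boot all_order all_algebra.
Set Implicit Arguments. Unset Strict Implicit. Unset Printing Implicit Defensive.

Definition red (t : seq nat) : seq nat := [seq count (fun y => y <= x) t | x <- t].

(* An occurrence of the pattern tau in the circular permutation represented by
   the linear word s: a subsequence (selected by a mask) of some rotation of s
   whose reduced form is tau. *)
Definition occurs_circ (tau s : seq nat) : bool :=
  [exists i : 'I_(size s), exists m : (size s).-tuple bool,
     red (mask m (rot i s)) == tau].

Definition avoids_circ (tau s : seq nat) : bool := ~~ occurs_circ tau s.

(* Circular permutations of [n], represented uniquely by the linear
   permutations of 1..n whose last entry is n. *)
Definition circ_perms (n : nat) : seq (seq nat) :=
  [seq s <- permutations (iota 1 n) | last 0 s == n].

(* Main.v *)
Require Import Defs.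
From mathcomp Require Import all_boot all_order all_algebra.
From mathcomp Require Import zify.
Set Implicit Arguments. Unset Strict Implicit. Unset Printing Implicit Defensive.

Definition Inc3 (s : seq nat) := exists x y z, x < y /\ y < z /\ subseq [:: x; y; z] s.
Definition P3412 (s : seq nat) := exists a b c d, a < b /\ b < c /\ c < d /\ subseq [:: c; d; a; b] s.
Definition Av s := ~ Inc3 s /\ ~ P3412 s.

Lemma subseq_cons2 (x y : nat) s t :
  subseq (y :: s) (x :: t) = if y == x then subseq s t else subseq (y :: s) t.
Proof. by rewrite /=; case: eqP. Qed.

Lemma subseq_split (s t1 t2 : seq nat) : subseq s (t1 ++ t2) ->
  exists s1 s2, s = s1 ++ s2 /\ subseq s1 t1 /\ subseq s2 t2.
Proof.
elim: t1 s => [|x t1 IH] s /=.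
  by move=> H; exists [::], s.
case: s => [|y s]; first by move=> _; exists [::], [::]; rewrite !sub0seq.
case: eqP => [-> | ne] H.
  have [s1 [s2 [-> [H1 H2]]]] := IH _ H.
  by exists (x :: s1), s2; rewrite /= eqxx.
have [s1 [s2 [E [H1 H2]]]] := IH _ H.
exists s1, s2; split=> //; split=> //.
exact: subseq_trans H1 (subseq_cons _ _).
Qed.

Lemma subseq_split2 (s1 s2 t : seq nat) : subseq (s1 ++ s2) t ->
  exists t1 t2, t = t1 ++ t2 /\ subseq s1 t1 /\ subseq s2 t2.
Proof.
elim: t s1 => [|x t IH] s1.
  case: s1 => [|? ?] //=; case: s2 => [|? ?] //= _.
  by exists [::], [::].
case: s1 => [|y s1] H.
  by exists [::], (x :: t); rewrite sub0seq.
rewrite cat_cons subseq_cons2 in H.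
case: eqP H => [-> | ne] H.
  have [t1 [t2 [-> [H1 H2]]]] := IH _ H.
  by exists (x :: t1), t2; rewrite /= eqxx.
have [t1 [t2 [-> [H1 H2]]]] := IH (y :: s1) H.
exists (x :: t1), t2; split=> //; split=> //.
by rewrite subseq_cons2; case: eqP.
Qed.

Lemma sub2_index (s : seq nat) u v : uniq s ->
  subseq [:: u; v] s = [&& u \in s, v \in s & index u s < index v s].
Proof.
elim: s => [|x s IH] // /andP[xs us].
rewrite subseq_cons2 !inE /=.
case: (eqVneq u x) => [->|nux].
  rewrite /= sub1seq.
  case: (eqVneq v x) => [->|nvx] /=; first by rewrite (negPf xs).
  by rewrite andbT.
rewrite IH //=.
case: (eqVneq v x) => [->|nvx] /=.
  rewrite ltn0 !andbF.
  apply/negP => /andP[us' /andP[xs' _]]; by rewrite xs' in xs.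
by rewrite ltnS.
Qed.

Lemma red_1234P t : red t = [:: 1; 2; 3; 4] ->
  exists a b c d, t = [:: a; b; c; d] /\ a < b /\ b < c /\ c < d.
Proof.
case: t => [|a [|b [|c [|d [|e t]]]]] //= H.
exists a, b, c, d; split=> //; move: H; rewrite /red /= => [[]]; lia.
Qed.

Lemma red_1234_of a b c d : a < b -> b < c -> c < d ->
  red [:: a; b; c; d] = [:: 1; 2; 3; 4].
Proof. move=> *; rewrite /red /=; repeat f_equal; lia. Qed.

Lemma occP s : occurs_circ [:: 1; 2; 3; 4] s <->
  exists i, i < size s /\ exists a b c d, [/\ a < b, b < c, c < d &
     subseq [:: a; b; c; d] (rot i s)].
Proof.
split.
  case/existsP=> i /existsP [m /eqP H].
  have [a [b [c [d [E [h1 [h2 h3]]]]]]] := red_1234P H.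
  exists i; split; first exact: ltn_ord.
  exists a, b, c, d; split=> //; apply/subseqP; exists m => //.
  by rewrite size_tuple size_rot.
case=> i [Hi [a [b [c [d [h1 h2 h3 /subseqP [m Hm E]]]]]]].
apply/existsP; exists (Ordinal Hi).
have Hm' : size m == size s by rewrite Hm size_rot.
apply/existsP; exists (Tuple Hm') => /=.
by rewrite -E red_1234_of.
Qed.

Lemma sub_cons_ne (y N : nat) v t : subseq (y :: v) (N :: t) -> y != N -> subseq (y :: v) t.
Proof. by rewrite subseq_cons2 => H /negPf ne; rewrite ne in H. Qed.

Lemma circP (t : seq nat) N : all (fun x => x < N) t ->
  (occurs_circ [:: 1; 2; 3; 4] (rcons t N) <-> Inc3 t \/ P3412 t).
Proof.
move=> /allP altN; rewrite occP; split.
  case=> i [Hi [a [b [c [d [h1 h2 h3 H]]]]]].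
  rewrite size_rcons ltnS in Hi.
  move: H; rewrite -(cat_take_drop i t) rcons_cat -{1}(size_takel Hi) rot_size_cat cat_rcons.
  set t1 := take i t; set t2 := drop i t.
  have le1 : forall x, x \in N :: t1 -> x <= N.
    move=> x; rewrite inE => /orP [/eqP -> //|xt]; apply: ltnW; apply: altN.
    by rewrite -(cat_take_drop i t) mem_cat xt.
  move=> /subseq_split [u [v [E [Hu Hv]]]].
  have st2 : subseq t2 (t1 ++ t2) by apply: suffix_subseq.
  have st1 : subseq t1 (t1 ++ t2) by apply: prefix_subseq.
  case: u E Hu => [|u1 [|u2 [|u3 [|u4 [|u5 u]]]]] //= E Hu.
  - subst v; left; exists a, b, c; split=> //; split=> //.
    apply: subseq_trans (st1); apply: subseq_trans (_ : subseq [:: a; b; c; d] t1).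
      exact: (prefix_subseq [:: a; b; c] [:: d]).
    apply: (sub_cons_ne Hv); rewrite neq_ltn; apply/orP; left.
    apply: (leq_trans h1); apply: le1; apply: (mem_subseq Hv); by rewrite !inE eqxx !orbT.
  - case: E => e1 e2; subst u1 v; left; exists b, c, d; split=> //; split=> //.
    apply: subseq_trans (st1); apply: (sub_cons_ne Hv); rewrite neq_ltn; apply/orP; left.
    apply: (leq_trans h2); apply: le1; apply: (mem_subseq Hv); by rewrite !inE eqxx !orbT.
  - case: E => e1 e2 e3; subst u1 u2 v; right; exists a, b, c, d; split=> //; split=> //; split=> //.
    rewrite -[[:: c; d; a; b]]/([:: c; d] ++ [:: a; b]); apply: cat_subseq Hu.
    apply: (sub_cons_ne Hv); rewrite neq_ltn; apply/orP; left.
    apply: (leq_trans h3); apply: le1; apply: (mem_subseq Hv); by rewrite !inE eqxx !orbT.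
  - case: E => e1 e2 e3 e4; subst u1 u2 u3 v; left; exists a, b, c; split=> //; split=> //.
    exact: subseq_trans Hu st2.
  - case: E => e1 e2 e3 e4 e5; subst u1 u2 u3 u4 v; left; exists a, b, c; split=> //; split=> //.
    apply: subseq_trans (subseq_trans Hu st2).
    exact: (prefix_subseq [:: a; b; c] [:: d]).
case=> [[x [y [z [h1 [h2 H]]]]] | [a [b [c [d [h1 [h2 [h3 H]]]]]]]].
  exists 0; split; first by rewrite size_rcons.
  exists x, y, z, N; split=> //; first by apply: altN; apply: (mem_subseq H); rewrite !inE eqxx !orbT.
  by rewrite rot0 -cats1 -[[:: x; y; z; N]]/([:: x; y; z] ++ [:: N]) cat_subseq.
have [t1 [t2 [Et [H1 H2]]]] := @subseq_split2 [:: c; d] [:: a; b] t H.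
exists (size t1); split; first by rewrite size_rcons Et size_cat ltnS leq_addr.
exists a, b, c, d; split=> //.
rewrite Et rcons_cat rot_size_cat -[[:: a; b; c; d]]/([:: a; b] ++ [:: c; d]).
by apply: cat_subseq => //; apply: subseq_trans H2 (subseq_rcons _ _).
Qed.

Lemma gtn_tr : transitive gtn.
Proof. by move=> y x z /= h1 h2; apply: ltn_trans h2 h1. Qed.

Lemma sorted_sub (s t : seq nat) : subseq s t -> sorted gtn t -> sorted gtn s.
Proof. by move=> H; apply: (subseq_sorted gtn_tr H). Qed.

Lemma sorted_no_asc (s : seq nat) y z : sorted gtn s -> subseq [:: y; z] s -> z < y.
Proof. by move=> S H; have := sorted_sub H S => /= /andP[]. Qed.

Lemma not_sorted_asc (s : seq nat) : uniq s -> ~~ sorted gtn s ->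
  exists y z, y < z /\ subseq [:: y; z] s.
Proof.
elim: s => [|x s IH] // /andP[xs us].
case: s IH xs us => [|x2 s] // IH xs us h.
have {h} : ~~ (x2 < x) || ~~ sorted gtn (x2 :: s) by rewrite -negb_and.
case/orP => [h | h].
  exists x, x2; split; last by rewrite subseq_cons2 eqxx subseq_cons2 eqxx sub0seq.
  rewrite ltn_neqAle leqNgt h andbT; apply: contra xs => /eqP ->; exact: mem_head.
have [y [z [yz H]]] := IH us h.
exists y, z; split=> //; apply: subseq_trans H (subseq_cons _ _).
Qed.

Lemma sorted_of_no_asc (s : seq nat) : uniq s ->
  (forall y z, y < z -> subseq [:: y; z] s -> False) -> sorted gtn s.
Proof.
move=> us H; apply/negPn/negP => ns.
by have [y [z [yz Hs]]] := not_sorted_asc us ns; apply: (H y z).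
Qed.

Lemma Av_sub (s t : seq nat) : subseq s t -> Av t -> Av s.
Proof.
move=> st [H1 H2]; split.
  by move=> [x [y [z [h1 [h2 h]]]]]; apply: H1; exists x, y, z; do 2 split=> //; apply: subseq_trans st.
move=> [a [b [c [d [h1 [h2 [h3 h]]]]]]]; apply: H2; exists a, b, c, d; do 3 split=> //.
exact: subseq_trans st.
Qed.

Lemma split_at (t A B : seq nat) m : subseq t (A ++ m :: B) ->
  subseq t (A ++ B) \/ exists u v, [/\ t = u ++ m :: v, subseq u A & subseq v B].
Proof.
move=> /subseq_split [u [w [-> [Hu Hw]]]].
case: w Hw => [|y w] Hw.
  by left; rewrite cats0; apply: subseq_trans Hu (prefix_subseq _ _).
case: (eqVneq y m) Hw => [->|ne] Hw.
  by right; exists u, w; split=> //; rewrite subseq_cons2 eqxx in Hw.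
by left; apply: (cat_subseq Hu); apply: sub_cons_ne Hw ne.
Qed.

Lemma ins_max (A B : seq nat) m : all (fun x => x < m) (A ++ B) -> uniq (A ++ m :: B) ->
  (Av (A ++ m :: B) <-> [/\ Av (A ++ B), sorted gtn A &
       forall a y z, a \in A -> y < z -> z < a -> subseq [:: y; z] B -> False]).
Proof.
move=> /allP lt_m uS.
have sAB : subseq (A ++ B) (A ++ m :: B) by apply: cat_subseq (subseq_refl _) (subseq_cons _ _).
have mB : forall x, x \in B -> x < m by move=> x xB; apply: lt_m; rewrite mem_cat xB orbT.
have mA : forall x, x \in A -> x < m by move=> x xA; apply: lt_m; rewrite mem_cat xA.
split.
  move=> HAv; split.
  - exact: Av_sub sAB HAv.
  - apply: sorted_of_no_asc; first by move: uS; rewrite cat_uniq => /and3P[].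
    move=> y z yz H; case: HAv => H1 _; apply: H1; exists y, z, m; split=> //; split.
      by apply: mA; apply: (mem_subseq H); rewrite !inE eqxx orbT.
    rewrite -[[:: y; z; m]]/([:: y; z] ++ [:: m]); apply: cat_subseq H _.
    by rewrite sub1seq mem_head.
  - move=> a y z aA yz za H; case: HAv => _ H2; apply: H2; exists y, z, a, m.
    do 3 split=> //; first exact: mA.
    rewrite -[[:: a; m; y; z]]/([:: a] ++ [:: m; y; z]); apply: cat_subseq.
      by rewrite sub1seq.
    by rewrite subseq_cons2 eqxx.
case=> [[H1 H2] SA Hbad]; split.
  move=> [x [y [z [h1 [h2 /split_at [H | [u [v [E Hu Hv]]]]]]]]].
    by apply: H1; exists x, y, z.
  case: u E Hu => [|u1 [|u2 [|u3 u]]] //= E Hu.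
  - case: E => *; subst; have := mB _ (mem_subseq Hv (mem_head _ _)); lia.
  - case: E => *; subst; have := mB _ (mem_subseq Hv (mem_head _ _)); lia.
  - case: E => *; subst; have := sorted_no_asc SA Hu; lia.
  - by case: E => _ _ _; case: u Hu.
move=> [a [b [c [d [h1 [h2 [h3 /split_at [H | [u [v [E Hu Hv]]]]]]]]]]].
  by apply: H2; exists a, b, c, d.
case: u E Hu => [|u1 [|u2 [|u3 [|u4 u]]]] //= E Hu.
- case: E => *; subst; have := mB _ (mem_subseq Hv (mem_head _ _)); lia.
- case: E => *; subst; rewrite sub1seq in Hu; apply: (Hbad _ _ _ Hu _ _ Hv); lia.
- case: E => *; subst; have := mB _ (mem_subseq Hv (mem_head _ _)); lia.
- case: E => *; subst.
  have := sorted_no_asc SA (subseq_trans (prefix_subseq [:: _; _] [:: _]) Hu); lia.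
- by case: E => _ _ _ _; case: u Hu.
Qed.

Lemma asc_lowhigh (w D1 D2 : seq nat) x y : sorted gtn D1 -> sorted gtn D2 ->
  (forall a b, a \in D1 -> b \in D2 -> a < b) -> {subset w <= D1 ++ D2} ->
  [seq z <- w | z \in D1] = D1 -> [seq z <- w | z \in D2] = D2 ->
  subseq [:: x; y] w -> x < y -> x \in D1 /\ y \in D2.
Proof.
move=> S1 S2 lt12 sub F1 F2 H xy.
have xw : x \in w by apply: (mem_subseq H); rewrite mem_head.
have yw : y \in w by apply: (mem_subseq H); rewrite !inE eqxx orbT.
have key : forall D, [seq z <- w | z \in D] = D -> sorted gtn D -> x \in D -> y \in D -> False.
  move=> D F S xD yD.
  have : subseq [:: x; y] D by rewrite -F subseq_filter /= xD yD H.
  move/(sorted_no_asc S); lia.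
have := sub _ xw; have := sub _ yw; rewrite !mem_cat.
case xD1: (x \in D1); case yD1: (y \in D1); case xD2: (x \in D2); case yD2: (y \in D2) => //= _ _;
  first [by case: (key _ F1 S1 xD1 yD1) | by case: (key _ F2 S2 xD2 yD2)
        | (have := lt12 _ _ yD1 xD2; lia) | by [] ].
Qed.

Lemma Av_lowhigh (w D1 D2 : seq nat) : sorted gtn D1 -> sorted gtn D2 ->
  (forall a b, a \in D1 -> b \in D2 -> a < b) -> {subset w <= D1 ++ D2} ->
  [seq z <- w | z \in D1] = D1 -> [seq z <- w | z \in D2] = D2 -> Av w.
Proof.
move=> S1 S2 lt12 sub F1 F2.
have asc := fun x y H => @asc_lowhigh w D1 D2 x y S1 S2 lt12 sub F1 F2 H.
split.
  move=> [x [y [z [h1 [h2 H]]]]].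
  have [_ yD2] := asc x y (subseq_trans (prefix_subseq [:: x; y] [:: z]) H) h1.
  have [yD1 _] := asc y z (subseq_trans (subseq_cons _ _) H) h2.
  have := lt12 _ _ yD1 yD2; lia.
move=> [a [b [c [d [h1 [h2 [h3 H]]]]]]].
have [cD1 _] := asc c d (subseq_trans (prefix_subseq [:: c; d] [:: a; b]) H) h3.
have [_ bD2] := asc a b (subseq_trans (suffix_subseq [:: c; d] [:: a; b]) H) h1.
have := lt12 _ _ cD1 bD2; lia.
Qed.

Lemma Av_cat2 (A B : seq nat) : sorted gtn A -> sorted gtn B -> Av (A ++ B).
Proof.
move=> SA SB; split.
  move=> [x [y [z [h1 [h2 /subseq_split [u [v [E [Hu Hv]]]]]]]]].
  case: u E Hu => [|u1 [|u2 [|u3 [|u4 u]]]] //= E Hu; case: E => *; subst;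
   move: (sorted_sub Hu SA) (sorted_sub Hv SB) => /=; lia.
move=> [a [b [c [d [h1 [h2 [h3 /subseq_split [u [v [E [Hu Hv]]]]]]]]]]].
case: u E Hu => [|u1 [|u2 [|u3 [|u4 [|u5 u]]]]] //= E Hu; case: E => *; subst;
  move: (sorted_sub Hu SA) (sorted_sub Hv SB) => /=; lia.
Qed.

Lemma filter_self (s : seq nat) : [seq z <- s | z \in s] = s.
Proof. by apply/all_filterP/allP. Qed.

Lemma filter_disj (s D : seq nat) : (forall z, z \in s -> z \notin D) -> [seq z <- s | z \in D] = [::].
Proof.
move=> H; rewrite (@eq_in_filter _ _ pred0) ?filter_pred0 // => z /H /negPf ->.
by [].
Qed.

Lemma filter_eqin (s D D' : seq nat) : {in s, D =i D'} -> [seq z <- s | z \in D] = [seq z <- s | z \in D'].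
Proof. by move=> H; apply: eq_in_filter => z /H. Qed.

Lemma sorted_gtn_cat (s1 s2 : seq nat) : sorted gtn s1 -> sorted gtn s2 ->
  (forall a b, a \in s1 -> b \in s2 -> b < a) -> sorted gtn (s1 ++ s2).
Proof.
rewrite !(sorted_pairwise gtn_tr) pairwise_cat => -> -> H; rewrite !andbT.
by apply/allrelP => a b /H h /h.
Qed.

Lemma gtn_anti : antisymmetric gtn.
Proof. move=> x y /andP [] /=; lia. Qed.

Fixpoint subseqs (s : seq nat) : seq (seq nat) :=
  if s is x :: s' then [seq x :: t | t <- subseqs s'] ++ subseqs s' else [:: [::]].

Lemma size_subseqs s : size (subseqs s) = 2 ^ size s.
Proof. by elim: s => //= x s IH; rewrite size_cat size_map IH expnS mul2n addnn. Qed.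

Lemma mem_subseqs s t : (t \in subseqs s) = subseq t s.
Proof.
elim: s t => [|x s IH] t; first by case: t.
rewrite [subseqs (x :: s)]/= mem_cat IH.
case: t => [|y t]; first by rewrite sub0seq orbT.
rewrite subseq_cons2.
have -> : (y :: t \in [seq x :: t | t <- subseqs s]) = (y == x) && subseq t s.
  apply/mapP/andP => [[t' t's [-> ->]] | [/eqP -> ts]]; first by rewrite eqxx -IH.
  by exists t; rewrite ?IH.
case: eqP => [-> | _] //=.
by apply/orP/idP => [[//|] | ->]; [apply: subseq_trans; apply: subseq_cons | left].
Qed.

Lemma uniq_subseqs s : uniq s -> uniq (subseqs s).
Proof.
elim: s => [|x s IH] //= /andP [xs us].
rewrite cat_uniq (map_inj_uniq (fun a b => @congr1 _ _ behead (x :: a) (x :: b))) IH // andbT /=.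
apply/hasPn => t; rewrite mem_subseqs => ts; apply/mapP => [[t' _ E]].
by move: ts; rewrite E => /mem_subseq /(_ x (mem_head _ _)); apply/negP.
Qed.

Fixpoint shuffles (L H : seq nat) : seq (seq nat) :=
  match L with
  | [::] => [:: H]
  | x :: L' =>
    let fix aux (H : seq nat) :=
      match H with
      | [::] => [:: L]
      | y :: H' => [seq x :: t | t <- shuffles L' H] ++ [seq y :: t | t <- aux H']
      end in aux H
  end.

Lemma shE x L y H : shuffles (x :: L) (y :: H) =
  [seq x :: t | t <- shuffles L (y :: H)] ++ [seq y :: t | t <- shuffles (x :: L) H].
Proof. by []. Qed.

Lemma sh0r L : shuffles L [::] = [:: L].
Proof. by case: L. Qed.

Lemma size_sh L H : size (shuffles L H) = 'C(size L + size H, size L).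
Proof.
elim: L H => [|x L IHL] H; first by rewrite bin0.
elim: H => [|y H IHH]; first by rewrite sh0r addn0 binn.
rewrite shE size_cat !size_map IHL IHH /= addnS addSn binS addnS.
by rewrite addnC.
Qed.

Lemma sh_sound L H B : uniq (L ++ H) -> B \in shuffles L H ->
  [/\ perm_eq B (L ++ H), [seq z <- B | z \in L] = L & [seq z <- B | z \in H] = H].
Proof.
elim: L H B => [|x L IHL] H B.
  rewrite inE => _ /eqP ->; split => //; [by apply: filter_disj | exact: filter_self].
elim: H B => [|y H IHH] B U.
  rewrite sh0r inE => /eqP ->; rewrite cats0; split=> //; [exact: filter_self | by apply: filter_disj].
rewrite shE mem_cat => /orP [] /mapP [B' HB' ->].
  move: (U) => /= /andP [xn U'].
  have [P1 F1 F2] := IHL (y :: H) B' U' HB'.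
  have xB' : x \notin B' by rewrite (perm_mem P1).
  split; first by rewrite perm_cons.
    rewrite /= inE eqxx /= -[in RHS]F1; congr (_ :: _); apply: filter_eqin => z zB.
    rewrite inE; case: eqP => // zx; by rewrite -zx zB in xB'.
  have xyH : x \notin y :: H by apply/negP => xH; rewrite mem_cat xH orbT in xn.
  by rewrite /= (negPf xyH).
have U'' : uniq ((x :: L) ++ H).
  by apply: subseq_uniq U; apply: cat_subseq (subseq_refl _) (subseq_cons _ _).
have yn : y \notin (x :: L) ++ H.
  move: U; rewrite cat_uniq => /and3P [_ h /andP [yH _]].
  rewrite mem_cat negb_or yH andbT; apply: contra h => yL.
  by apply/hasP; exists y => //; exact: mem_head.
have [P1 F1 F2] := IHH B' U'' HB'.
have yB' : y \notin B' by rewrite (perm_mem P1).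
split.
- by rewrite perm_sym -[y :: H]cat1s perm_catCA /= perm_cons perm_sym.
- have yxL : y \notin x :: L by apply/negP => yL; rewrite mem_cat yL in yn.
  by rewrite /= (negPf yxL).
- rewrite /= inE eqxx /= -[in RHS]F2; congr (_ :: _); apply: filter_eqin => z zB.
  rewrite inE; case: eqP => // zy; by rewrite -zy zB in yB'.
Qed.

Lemma sh_consL b L H B : B \in shuffles L H -> b :: B \in shuffles (b :: L) H.
Proof.
case: H => [|y H] HB; first by move: HB; rewrite !sh0r !inE => /eqP ->.
by rewrite shE mem_cat map_f.
Qed.

Lemma sh_consR b L H B : B \in shuffles L H -> b :: B \in shuffles L (b :: H).
Proof.
case: L => [|x L] HB; first by move: HB; rewrite !inE => /eqP ->.
by rewrite shE mem_cat map_f ?orbT.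
Qed.

Lemma sh_complete L H B : uniq (L ++ H) -> perm_eq B (L ++ H) ->
  [seq z <- B | z \in L] = L -> [seq z <- B | z \in H] = H -> B \in shuffles L H.
Proof.
elim: B L H => [|b B IH] L H U P F1 F2.
  by move: F1 F2 => /= <- <-; rewrite inE.
have uB : uniq (b :: B) by rewrite (perm_uniq P) U.
move: (uB) => /andP [bB uB'].
have bLH : b \in L ++ H by rewrite -(perm_mem P) mem_head.
have disj : forall z, z \in L -> z \notin H.
  move=> z zL; move: U; rewrite cat_uniq => /and3P [_ h _]; apply: contra h => zH.
  by apply/hasP; exists z.
case bL: (b \in L).
  set L' := [seq z <- B | z \in L].
  have EL : L = b :: L' by rewrite -F1 /= bL.
  have bH : b \notin H := disj b bL.
  have F2' : [seq z <- B | z \in H] = H by move: F2; rewrite /= (negPf bH).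
  have U' : uniq (L' ++ H) by move: U; rewrite EL /= => /andP [].
  have P' : perm_eq B (L' ++ H) by move: P; rewrite EL /= perm_cons.
  have F1' : [seq z <- B | z \in L'] = L'.
    rewrite (@filter_eqin _ L' L) // => z zB; by rewrite /L' mem_filter zB andbT.
  by rewrite EL; apply: sh_consL; apply: IH.
have bH : b \in H by move: bLH; rewrite mem_cat bL.
set H' := [seq z <- B | z \in H].
have EH : H = b :: H' by rewrite -F2 /= bH.
have F1' : [seq z <- B | z \in L] = L by move: F1; rewrite /= bL.
have U' : uniq (L ++ H').
  by apply: subseq_uniq U; rewrite EH; apply: cat_subseq (subseq_refl _) (subseq_cons _ _).
have P' : perm_eq B (L ++ H').
  move: P; rewrite EH -[b :: H']cat1s perm_sym perm_catCA /= perm_cons perm_sym //.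
have F2' : [seq z <- B | z \in H'] = H'.
  rewrite (@filter_eqin _ H' H) // => z zB; by rewrite /H' mem_filter zB andbT.
by rewrite EH; apply: sh_consR; apply: IH.
Qed.

Lemma cons_inj (x : nat) : injective (cons x).
Proof. by move=> a b [->]. Qed.

Lemma uniq_sh L H : uniq (L ++ H) -> uniq (shuffles L H).
Proof.
elim: L H => [|x L IHL] H; first by [].
elim: H => [|y H IHH] U; first by rewrite sh0r.
rewrite shE cat_uniq !(map_inj_uniq (@cons_inj _)).
rewrite IHL; last by move: U => /= /andP [].
rewrite IHH; last by apply: subseq_uniq U; apply: cat_subseq (subseq_refl _) (subseq_cons _ _).
rewrite andTb andbT.
apply/hasPn => t /mapP [t' _ ->]; apply/mapP => [[t'' _ [E _]]].
by move: U; rewrite E /= mem_cat inE eqxx orbT.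
Qed.

Lemma count_sorted_sh L H : uniq (L ++ H) -> sorted gtn L -> sorted gtn H ->
  (forall a b, a \in L -> b \in H -> a < b) ->
  count (sorted gtn) (shuffles L H) = 1.
Proof.
move=> U SL SH lt.
have disj : forall z, z \in H -> z \notin L.
  by move=> z zH; apply/negP => zL; have := lt _ _ zL zH; lia.
have HLin : H ++ L \in shuffles L H.
  apply: sh_complete => //; first by rewrite perm_catC.
    by rewrite filter_cat filter_disj // filter_self.
  by rewrite filter_cat filter_self (@filter_disj L H) ?cats0 // => z zL; apply/negP => /disj; rewrite zL.
have SHL : sorted gtn (H ++ L) by apply: sorted_gtn_cat => // a b aH bL; apply: lt.
rewrite (@eq_in_count _ _ (pred1 (H ++ L))); last first.
  move=> B HB /=; apply/idP/eqP => [SB | ->] //.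
  have [P _ _] := sh_sound U HB.
  apply: (sorted_eq gtn_tr gtn_anti) => //; by rewrite (perm_trans P) // perm_catC.
by rewrite count_uniq_mem ?uniq_sh // HLin.
Qed.

Definition Dk k := rev (iota 1 k).
Definition fam2 k : seq (seq nat) :=
  [seq A ++ k.+1 :: [seq z <- Dk k | z \notin A] | A <- subseqs (Dk k) & A != [::]].
Definition Lo p := rev (iota 1 p).
Definition Mi p r := rev (iota p.+1 r).
Definition Hi p r q := rev (iota (p + r).+1 q).
Definition SP k : seq (nat * nat) := [seq (s, p) | s <- iota 0 k, p <- iota 0 s.+1].
Definition shf k (sp : nat * nat) : seq (seq nat) :=
  [seq B <- shuffles (Lo sp.2) (Hi sp.2 (k - sp.1) (sp.1 - sp.2)) | ~~ sorted gtn B].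
Definition Tk k : seq ((nat * nat) * seq nat) := [seq (sp, B) | sp <- SP k, B <- shf k sp].
Definition fam3 k : seq (seq nat) := [seq Mi x.1.2 (k - x.1.1) ++ k.+1 :: x.2 | x <- Tk k].

Fixpoint gen k : seq (seq nat) :=
  if k is k'.+1 then [seq k'.+1 :: t | t <- gen k'] ++ fam2 k' ++ fam3 k' else [:: [::]].

Lemma iotaSr k : iota 1 k.+1 = rcons (iota 1 k) k.+1.
Proof. by rewrite -(addn1 k) iotaD cats1 add1n addn1. Qed.

Lemma iota3 p r q : iota 1 (p + r + q) = iota 1 p ++ iota p.+1 r ++ iota (p + r).+1 q.
Proof. by rewrite !iotaD catA add1n addSn. Qed.

Lemma sorted_rev_iota a n : sorted gtn (rev (iota a n)).
Proof.
rewrite rev_sorted; apply: (sub_sorted _ (iota_ltn_sorted a n)) => x y /=; lia.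
Qed.

Lemma mem_riota a n x : (x \in rev (iota a n)) = (a <= x < a + n).
Proof. by rewrite mem_rev mem_iota. Qed.

Lemma perm_split k A B : perm_eq (A ++ k.+1 :: B) (iota 1 k.+1) ->
  [/\ all (fun x => x < k.+1) (A ++ B), uniq (A ++ k.+1 :: B) & perm_eq (A ++ B) (iota 1 k)].
Proof.
move=> P.
have U : uniq (A ++ k.+1 :: B) by rewrite (perm_uniq P) iota_uniq.
have P' : perm_eq (A ++ B) (iota 1 k).
  by move: P; rewrite iotaSr perm_sym perm_rcons -[k.+1 :: B]cat1s perm_sym perm_catCA /= perm_cons.
split=> //; apply/allP => x; rewrite (perm_mem P') mem_iota; lia.
Qed.

Lemma perm_join k A B : perm_eq (A ++ B) (iota 1 k) -> perm_eq (A ++ k.+1 :: B) (iota 1 k.+1).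
Proof.
by move=> P; rewrite iotaSr perm_sym perm_rcons perm_sym -[k.+1 :: B]cat1s perm_catCA /= perm_cons.
Qed.

Lemma Av_nil : Av [::].
Proof. by split=> [[x [y [z [_ [_ H]]]]] | [a [b [c [d [_ [_ [_ H]]]]]]]]. Qed.

Lemma uniq_Dk k : uniq (Dk k).
Proof. by rewrite rev_uniq iota_uniq. Qed.

Lemma cons_sound k t : perm_eq t (iota 1 k) -> Av t ->
  perm_eq (k.+1 :: t) (iota 1 k.+1) /\ Av (k.+1 :: t).
Proof.
move=> P Avt; have P' := @perm_join k [::] t P; split=> //.
have [Hall U _] := perm_split P'.
by apply/(ins_max Hall U); split.
Qed.

Lemma fam2_sound k s : s \in fam2 k -> perm_eq s (iota 1 k.+1) /\ Av s.
Proof.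
move=> /mapP [A]; rewrite mem_filter => /andP [nA]; rewrite mem_subseqs => sAD ->.
set Bc := [seq z <- Dk k | z \notin A].
have SD : sorted gtn (Dk k) := sorted_rev_iota 1 k.
have EA := elimT (subseq_uniqP (uniq_Dk k)) sAD.
have PAB : perm_eq (A ++ Bc) (iota 1 k).
  by rewrite {1}EA /Bc (perm_filterC [in A]) /Dk perm_rev.
have P := perm_join PAB; split=> //.
have [Hall U _] := perm_split P.
apply/(ins_max Hall U); split.
- apply: Av_cat2; first exact: sorted_sub sAD SD.
  exact: (sorted_filter gtn_tr _ SD).
- exact: sorted_sub sAD SD.
- move=> a y z _ yz _ H; have := sorted_no_asc (sorted_filter gtn_tr _ SD) H; lia.
Qed.

Lemma fam3_core p r q B : B \in shuffles (Lo p) (Hi p r q) ->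
  perm_eq (Mi p r ++ (p + r + q).+1 :: B) (iota 1 (p + r + q).+1) /\
  Av (Mi p r ++ (p + r + q).+1 :: B).
Proof.
move=> HB.
have PALL : perm_eq (Mi p r ++ Lo p ++ Hi p r q) (iota 1 (p + r + q)).
  rewrite iota3 perm_catCA; apply: perm_cat; first by rewrite /Lo perm_rev.
  by apply: perm_cat; rewrite ?/Mi ?/Hi perm_rev.
have uLH : uniq (Lo p ++ Hi p r q).
  by move: (perm_uniq PALL); rewrite iota_uniq cat_uniq => /and3P [].
have [PB F1 F2] := sh_sound uLH HB.
have PMB : perm_eq (Mi p r ++ B) (iota 1 (p + r + q)).
  by apply: perm_trans PALL; apply: perm_cat.
have P := perm_join PMB; split=> //.
have [Hall U _] := perm_split P.
have inB : forall z, z \in B -> z <= p \/ p + r < z.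
  move=> z; rewrite (perm_mem PB) mem_cat /Lo /Hi !mem_riota; lia.
have SL : sorted gtn (Lo p) := sorted_rev_iota _ _.
have SH : sorted gtn (Hi p r q) := sorted_rev_iota _ _.
have ltLH : forall a b, a \in Lo p -> b \in Hi p r q -> a < b.
  move=> a b; rewrite /Lo /Hi !mem_riota; lia.
apply/(ins_max Hall U); split.
- have EML : Mi p r ++ Lo p = rev (iota 1 (p + r)) by rewrite iotaD rev_cat add1n.
  apply: (@Av_lowhigh _ (Mi p r ++ Lo p) (Hi p r q)).
  + by rewrite EML; apply: sorted_rev_iota.
  + exact: SH.
  + move=> a b; rewrite EML /Hi !mem_riota; lia.
  + move=> z; rewrite !mem_cat (perm_mem PB) mem_cat; case/orP=> [->//|]; case/orP=> ->;
      rewrite ?orbT //.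
  + rewrite filter_cat (_ : [seq z <- Mi p r | z \in Mi p r ++ Lo p] = Mi p r); last first.
      by apply/all_filterP/allP => z zM; rewrite mem_cat zM.
    congr (_ ++ _); rewrite -[in RHS]F1; apply: filter_eqin => z zB.
    rewrite mem_cat /Mi mem_riota; have := inB z zB; case: (leqP p.+1 z) => h1 /=; last by [].
    case: (ltnP z (p.+1 + r)) => h2 //=; lia.
  + rewrite filter_cat filter_disj ?F2 // => z; rewrite /Mi /Hi !mem_riota; lia.
- exact: sorted_rev_iota.
- move=> a y z aM yz za H.
  have sub : {subset B <= Lo p ++ Hi p r q} by move=> x; rewrite (perm_mem PB).
  have [_ zH] := asc_lowhigh SL SH ltLH sub F1 F2 H yz.
  move: aM zH; rewrite /Mi /Hi !mem_riota; lia.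
Qed.

Lemma fam3_sound k s : s \in fam3 k -> perm_eq s (iota 1 k.+1) /\ Av s.
Proof.
case/mapP=> x /allpairsPdep [sp [B [HSP HB ->]]] ->.
case/allpairsPdep: HSP HB => a [b [ha hb ->]] HB.
have HB' : B \in shuffles (Lo b) (Hi b (k - a) (a - b)).
  by move: HB; rewrite /shf mem_filter => /andP [].
move: ha hb; rewrite !mem_iota => ha hb.
have Ek : k = b + (k - a) + (a - b) by lia.
have := fam3_core HB'; rewrite -Ek; done.
Qed.

Lemma gen_sound k s : s \in gen k -> perm_eq s (iota 1 k) /\ Av s.
Proof.
elim: k s => [|k IH] s /=.
  by rewrite inE => /eqP ->; split=> //; exact: Av_nil.
rewrite !mem_cat => /or3P [| /fam2_sound // | /fam3_sound //].
by case/mapP=> t /IH [P A] ->; apply: cons_sound.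
Qed.

Lemma gtn_irr : irreflexive gtn.
Proof. by move=> x /=; rewrite ltnn. Qed.

Lemma struct3 k A B : A != [::] -> ~~ sorted gtn B -> perm_eq (A ++ B) (iota 1 k) ->
  Av (A ++ B) -> sorted gtn A ->
  (forall a y z, a \in A -> y < z -> z < a -> subseq [:: y; z] B -> False) ->
  A ++ k.+1 :: B \in fam3 k.
Proof.
move=> nA nSB PAB AvAB SA bad.
have uAB : uniq (A ++ B) by rewrite (perm_uniq PAB) iota_uniq.
have uB : uniq B by move: uAB; rewrite cat_uniq => /and3P [].
have disj : forall z, z \in A -> z \in B -> False.
  move=> z zA zB; move: uAB; rewrite cat_uniq => /and3P [_ /hasPn /(_ z zB)].
  by rewrite zA.
have between : forall a y z, a \in A -> y < z -> subseq [:: y; z] B -> y < a /\ a < z.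
  move=> a y z aA yz H.
  have yB : y \in B by apply: (mem_subseq H); rewrite mem_head.
  have zB : z \in B by apply: (mem_subseq H); rewrite !inE eqxx orbT.
  have ay : a != y by apply/eqP => E; subst; apply: (disj _ aA yB).
  have az : a != z by apply/eqP => E; subst; apply: (disj _ aA zB).
  have nza : ~ (z < a) by move=> za; apply: (bad a y z).
  have nay : ~ (a < y).
    move=> ay'; case: AvAB => H1 _; apply: H1; exists a, y, z; do 2 split=> //.
    rewrite -[[:: a; y; z]]/([:: a] ++ [:: y; z]); apply: cat_subseq H.
    by rewrite sub1seq.
  move: ay az => /eqP ay /eqP az; lia.
have [y0 [z0 [yz0 H0]]] := not_sorted_asc uB nSB.
have y0B : y0 \in B by apply: (mem_subseq H0); rewrite mem_head.
have z0B : z0 \in B by apply: (mem_subseq H0); rewrite !inE eqxx orbT.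
have dich : forall x, x \in B -> all (fun a => x < a) A || all (fun a => a < x) A.
  move=> x xB; apply/negPn/negP; rewrite negb_or => /andP [/allPn [a1 a1A h1] /allPn [a2 a2A h2]].
  have n1 : a1 != x by apply/eqP => E; subst; apply: (disj _ a1A xB).
  have n2 : a2 != x by apply/eqP => E; subst; apply: (disj _ a2A xB).
  have [_ h3] := between a2 y0 z0 a2A yz0 H0.
  have [h4 _] := between a1 y0 z0 a1A yz0 H0.
  move: h1 h2 n1 n2 => /negP h1 /negP h2 /eqP n1 /eqP n2.
  have ia : index y0 B < index z0 B by move: H0; rewrite sub2_index // => /and3P [].
  case: (ltngtP (index x B) (index z0 B)) => hi.
  - case: AvAB => H1 _; apply: H1; exists a1, x, z0.
    have l1 : a1 < x by clear -h1 n1; lia.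
    have l2 : x < z0 by clear -h2 h3; lia.
    split=> //; split=> //.
    rewrite -[[:: a1; x; z0]]/([:: a1] ++ [:: x; z0]); apply: cat_subseq.
      by rewrite sub1seq.
    by rewrite sub2_index // xB z0B hi.
  - have Hyx : subseq [:: y0; x] B by rewrite sub2_index // y0B xB (ltn_trans ia hi).
    have yx : y0 < x by clear -h4 h1 n1; lia.
    have [_ h5] := between a2 y0 x a2A yx Hyx.
    by clear -h5 h2 n2; lia.
  - have := nth_index 0 xB; rewrite hi nth_index // => E.
    by clear -E h2 h3 n2; subst; lia.
set a0 := head 0 A.
have a0A : a0 \in A by rewrite /a0; case: (A) nA => // a A' _; exact: mem_head.
set L := [seq x <- B | x < a0]; set Hs := [seq x <- B | a0 < x].
have lowL : forall x a, x \in L -> a \in A -> x < a.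
  move=> x a; rewrite mem_filter => /andP [xa0 xB] aA.
  case/orP: (dich x xB) => /allP h; first exact: h.
  by have := h a0 a0A; clear -xa0; lia.
have highH : forall x a, x \in Hs -> a \in A -> a < x.
  move=> x a; rewrite mem_filter => /andP [xa0 xB] aA.
  case/orP: (dich x xB) => /allP h; last exact: h.
  by have := h a0 a0A; clear -xa0; lia.
have SL : sorted gtn L.
  apply: sorted_of_no_asc; first exact: filter_uniq.
  move=> y z yz H.
  have [_ h] := between a0 y z a0A yz (subseq_trans H (filter_subseq _ _)).
  have : z \in L by apply: (mem_subseq H); rewrite !inE eqxx orbT.
  by rewrite mem_filter => /andP [h' _]; clear -h h'; lia.
have SH : sorted gtn Hs.
  apply: sorted_of_no_asc; first exact: filter_uniq.
  move=> y z yz H.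
  have [h _] := between a0 y z a0A yz (subseq_trans H (filter_subseq _ _)).
  have : y \in Hs by apply: (mem_subseq H); rewrite mem_head.
  by rewrite mem_filter => /andP [h' _]; clear -h h'; lia.
have PB : perm_eq B (L ++ Hs).
  have -> : Hs = [seq x <- B | predC (fun x => x < a0) x].
    apply: eq_in_filter => x xB /=.
    have : x != a0 by apply/eqP => E; subst; apply: (disj _ a0A xB).
    by move/eqP => h; clear -h; lia.
  by rewrite perm_sym perm_filterC.
have PW : perm_eq (Hs ++ A ++ L) (iota 1 k).
  apply: (perm_trans _ PAB); rewrite (perm_catC Hs) -catA; apply: perm_cat => //.
  by rewrite perm_sym.
have SW : sorted gtn (Hs ++ A ++ L).
  apply: sorted_gtn_cat => //.
    apply: sorted_gtn_cat => // a b aA bL; exact: lowL.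
  move=> a b aH; rewrite mem_cat => /orP [bA | bL]; first exact: highH.
  by have := lowL b a0 bL a0A; have := highH a a0 aH a0A; clear; lia.
set p := size L; set r := size A; set q := size Hs.
have Ek : k = p + r + q.
  move: (perm_size PW); rewrite !size_cat size_iota => <-; rewrite /p /r /q addnC (addnC (size A)) //.
have EW : Hs ++ A ++ L = Hi p r q ++ Mi p r ++ Lo p.
  have -> : Hi p r q ++ Mi p r ++ Lo p = rev (iota 1 k) by rewrite Ek iota3 !rev_cat catA.
  apply: (sorted_eq gtn_tr gtn_anti) => //; first exact: sorted_rev_iota.
  by rewrite perm_sym perm_rev perm_sym.
move/eqP: EW; rewrite eqseq_cat; last by rewrite size_rev size_iota.
case/andP => /eqP EH; rewrite eqseq_cat; last by rewrite size_rev size_iota.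
case/andP => /eqP EA /eqP EL.
have HB : B \in shuffles L Hs.
  apply: sh_complete => //; first by rewrite -(perm_uniq PB).
    rewrite /L; apply: eq_in_filter => x xB; by rewrite mem_filter xB andbT.
  rewrite /Hs; apply: eq_in_filter => x xB; by rewrite mem_filter xB andbT.
have r0 : 0 < r by rewrite /r; case: (A) nA.
have e1 : k - (p + q) = r by clear -Ek; lia.
have e2 : p + q - p = q by clear; lia.
apply/mapP; exists ((p + q, p), B); last by rewrite /= e1 -EA.
apply/allpairsPdep; exists (p + q, p), B; split=> //.
  apply/allpairsPdep; exists (p + q), p; split=> //; rewrite mem_iota; clear -Ek r0; lia.
by rewrite /shf mem_filter nSB /= e1 e2 -EL -EH.
Qed.

Lemma gen_complete k s : perm_eq s (iota 1 k) -> Av s -> s \in gen k.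
Proof.
elim: k s => [|k IH] s P Avs.
  by move: (perm_size P) => /= /size0nil ->; rewrite inE.
have m_in : k.+1 \in s by rewrite (perm_mem P) mem_iota; lia.
case/splitPr: m_in P Avs => A B P Avs.
have [Hall U PAB] := perm_split P.
have [AvAB SA bad] := (ins_max Hall U).1 Avs.
rewrite [gen _]/= !mem_cat.
case: (eqVneq A [::]) => [EA | nA].
  by subst A; apply/orP; left; apply: map_f; apply: IH.
case SB: (sorted gtn B); last by rewrite struct3 ?SB ?orbT.
apply/orP; right; apply/orP; left.
have uAB : uniq (A ++ B) by rewrite (perm_uniq PAB) iota_uniq.
have inD : forall z, (z \in Dk k) = (z \in A ++ B) by move=> z; rewrite /Dk mem_rev (perm_mem PAB).
have SD : sorted gtn (Dk k) := sorted_rev_iota 1 k.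
have EA : A = [seq z <- Dk k | z \in A].
  apply: (irr_sorted_eq gtn_tr gtn_irr) => //; first exact: (sorted_filter gtn_tr _ SD).
  by move=> z; rewrite mem_filter inD mem_cat; case: (z \in A).
have EB : B = [seq z <- Dk k | z \notin A].
  apply: (irr_sorted_eq gtn_tr gtn_irr) => //; first exact: (sorted_filter gtn_tr _ SD).
  move=> z; rewrite mem_filter inD mem_cat.
  case zB: (z \in B); case zA: (z \in A) => //=.
  by move: uAB; rewrite cat_uniq => /and3P [_ /hasPn /(_ z zB)]; rewrite zA.
apply/mapP; exists A; last by rewrite -EB.
rewrite mem_filter nA mem_subseqs /=; move: (filter_subseq [in A] (Dk k)); by rewrite -EA.
Qed.

Lemma cat_m_inj (m : nat) A A' B B' : m \notin A -> m \notin A' ->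
  A ++ m :: B = A' ++ m :: B' -> A = A' /\ B = B'.
Proof.
elim: A A' => [|a A IH] [|a' A'] //=.
- by move=> _ _ [->].
- by move=> _; rewrite inE negb_or => /andP [/negP ne _] [E _]; case: ne; rewrite E.
- by rewrite inE negb_or => /andP [/negP ne _] _ [E _]; case: ne; rewrite E.
- rewrite !inE !negb_or => /andP [_ h] /andP [_ h'] [-> E].
  by have [-> ->] := IH _ h h' E.
Qed.

Lemma fam_shape k s : s \in fam2 k ++ fam3 k ->
  exists A B, [/\ s = A ++ k.+1 :: B, A != [::] & k.+1 \notin A].
Proof.
rewrite mem_cat => /orP [].
  case/mapP=> A; rewrite mem_filter mem_subseqs => /andP [nA sAD] ->.
  exists A, [seq z <- Dk k | z \notin A]; split=> //.
  apply/negP => /(mem_subseq sAD); rewrite /Dk mem_riota; lia.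
case/mapP=> x /allpairsPdep [sp [B [HSP HB ->]]] ->.
case/allpairsPdep: HSP => a [b [ha hb ->]] /=.
exists (Mi b (k - a)), B; split=> //.
  move: ha; rewrite mem_iota /Mi => ha.
  rewrite -size_eq0 size_rev size_iota; lia.
move: ha hb; rewrite !mem_iota /Mi mem_riota; lia.
Qed.

Lemma uniq_fam2 k : uniq (fam2 k).
Proof.
rewrite /fam2 map_inj_in_uniq ?filter_uniq ?uniq_subseqs ?uniq_Dk //.
move=> A A'; rewrite !mem_filter !mem_subseqs => /andP [_ h] /andP [_ h'] E.
have nk : forall X, subseq X (Dk k) -> k.+1 \notin X.
  by move=> X sX; apply/negP => /(mem_subseq sX); rewrite /Dk mem_riota; lia.
by have [] := cat_m_inj (nk _ h) (nk _ h') E.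
Qed.

Lemma uniq_SP k : uniq (SP k).
Proof.
apply: allpairs_uniq_dep.
- exact: iota_uniq.
- by move=> x _; exact: iota_uniq.
- by move=> [x1 y1] [x2 y2] _ _ /= [-> ->].
Qed.

Lemma uniq_LoHi p r q : uniq (Lo p ++ Hi p r q).
Proof.
rewrite cat_uniq /Lo /Hi !rev_uniq !iota_uniq andbT /=.
apply/hasPn => x; rewrite !mem_riota; lia.
Qed.

Lemma uniq_Tk k : uniq (Tk k).
Proof.
apply: allpairs_uniq_dep.
- exact: uniq_SP.
- by move=> sp _; rewrite /shf filter_uniq // uniq_sh // uniq_LoHi.
- by move=> [x1 y1] [x2 y2] _ _ /= [-> ->].
Qed.

Lemma uniq_fam3 k : uniq (fam3 k).
Proof.
rewrite /fam3 map_inj_in_uniq ?uniq_Tk //.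
move=> x x' /allpairsPdep [sp [B [HSP _ ->]]] /allpairsPdep [sp' [B' [HSP' _ ->]]] /= E.
case/allpairsPdep: HSP E => a [b [ha hb ->]] /=.
case/allpairsPdep: HSP' => a' [b' [ha' hb' ->]] /= E.
move: ha hb ha' hb'; rewrite !mem_iota => ha hb ha' hb'.
have nk : forall a b, a < k -> b <= a -> k.+1 \notin Mi b (k - a).
  by move=> a0 b0 h1 h2; rewrite /Mi mem_riota; lia.
have [EM ->] := cat_m_inj (nk a b ltac:(lia) ltac:(lia)) (nk a' b' ltac:(lia) ltac:(lia)) E.
move: EM; rewrite /Mi => /(can_inj revK) EI.
have Es : k - a = k - a' by rewrite -(size_iota b.+1 (k - a)) EI size_iota.
have ea : a = a' by lia.
subst a'.
case E2: (k - a) EI => [|n]; first lia.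
by move=> /= [->].
Qed.

Lemma uniq_gen k : uniq (gen k).
Proof.
elim: k => [|k IH] //=.
rewrite cat_uniq (map_inj_uniq (@cons_inj _)) IH cat_uniq uniq_fam2 uniq_fam3 /= andbT.
apply/andP; split.
  apply/hasPn => s Hs; apply/mapP => [[t _ E]].
  have [A [B [EA nA nk]]] := fam_shape Hs.
  move: EA; rewrite E; case: A nA nk => [|a A] // _; rewrite inE negb_or => /andP [ne _] [e _].
  by rewrite e eqxx in ne.
apply/hasPn => s H3; apply/negP => H2.
case/mapP: H2 => A; rewrite mem_filter mem_subseqs => /andP [_ sAD] E2.
case/mapP: H3 => x /allpairsPdep [sp [B [HSP HB ->]]] E3.
case/allpairsPdep: HSP HB E3 => a [b [ha hb ->]] HB E3.
move: HB; rewrite /shf mem_filter => /andP [nS _].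
have nk1 : k.+1 \notin A by apply/negP => /(mem_subseq sAD); rewrite /Dk mem_riota; lia.
have nk2 : k.+1 \notin Mi b (k - a).
  by move: ha hb; rewrite !mem_iota /Mi mem_riota; lia.
have [_ EB] := cat_m_inj nk1 nk2 (etrans (esym E2) E3); simpl in EB.
by move: nS; rewrite -EB (sorted_filter gtn_tr _ (sorted_rev_iota 1 k)).
Qed.

Lemma size_fam2 k : size (fam2 k) + 1 = 2 ^ k.
Proof.
rewrite size_map size_filter.
have := count_predC (pred1 [::]) (subseqs (Dk k)).
rewrite size_subseqs /Dk size_rev size_iota => <-.
have -> : count (pred1 [::]) (subseqs (rev (iota 1 k))) = 1.
  by rewrite count_uniq_mem ?uniq_subseqs ?rev_uniq ?iota_uniq // mem_subseqs sub0seq.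
by rewrite addnC.
Qed.

Lemma sumn_allpairs (g : nat * nat -> nat) (s : seq nat) (t : nat -> seq nat) :
  sumn [seq g z | z <- [seq (x, y) | x <- s, y <- t x]] =
  sumn [seq sumn [seq g (x, y) | y <- t x] | x <- s].
Proof. by elim: s => //= x s IH; rewrite map_cat sumn_cat IH -map_comp. Qed.

Lemma sumn_iota_big (f : nat -> nat) n : sumn [seq f i | i <- iota 0 n] = \sum_(i < n) f i.
Proof.
rewrite sumnE big_map.
have -> : iota 0 n = index_iota 0 n by rewrite /index_iota subn0.
by rewrite big_mkord.
Qed.

Lemma sum_binom s : sumn [seq 'C(s, p) | p <- iota 0 s.+1] = 2 ^ s.
Proof.
rewrite sumn_iota_big -[2]/(1 + 1) expnDn; apply: eq_bigr => i _.
by rewrite !exp1n !muln1.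
Qed.

Lemma sumn_pred (f : nat -> nat) l : (forall x, x \in l -> 0 < f x) ->
  sumn [seq f x - 1 | x <- l] + size l = sumn [seq f x | x <- l].
Proof.
elim: l => //= x l IH H.
have h := H x (mem_head _ _).
rewrite -IH; last by move=> y yl; apply: H; rewrite inE yl orbT.
lia.
Qed.

Lemma size_shf k s p : s < k -> p <= s -> size (shf k (s, p)) + 1 = 'C(s, p).
Proof.
move=> sk ps; rewrite /shf size_filter /=.
have := count_predC (sorted gtn) (shuffles (Lo p) (Hi p (k - s) (s - p))).
rewrite count_sorted_sh ?uniq_LoHi ?sorted_rev_iota //; last first.
  by move=> a b; rewrite /Lo /Hi !mem_riota; lia.
rewrite size_sh /Lo /Hi !size_rev !size_iota (_ : p + (s - p) = s); last by lia.
move=> <-; rewrite addnC.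
by [].
Qed.

Definition S3 k := sumn [seq 2 ^ s - s.+1 | s <- iota 0 k].

Lemma size_fam3 k : size (fam3 k) = S3 k.
Proof.
rewrite size_map /Tk size_allpairs_dep /SP.
rewrite (sumn_allpairs (fun sp => size (shf k sp))).
rewrite /S3; congr sumn; apply/eq_in_map => s; rewrite mem_iota => hs.
have -> : [seq size (shf k (s, p)) | p <- iota 0 s.+1] = [seq 'C(s, p) - 1 | p <- iota 0 s.+1].
  apply/eq_in_map => p; rewrite mem_iota => hp /=.
  have := @size_shf k s p ltac:(lia) ltac:(lia); lia.
have := @sumn_pred (fun p => 'C(s, p)) (iota 0 s.+1).
rewrite sum_binom size_iota => h.
have pos : forall p, p \in iota 0 s.+1 -> 0 < 'C(s, p).
  by move=> p; rewrite mem_iota bin_gt0; lia.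
have {}h := h pos.
move: h; rewrite /=. lia.
Qed.

Lemma S3_eq k : S3 k + 'C(k.+1, 2) + 1 = 2 ^ k.
Proof.
elim: k => [|k IH]; first by [].
rewrite /S3 -(addn1 k) iotaD map_cat sumn_cat /= addn0 -/(S3 k) addn1.
rewrite add0n !addn1 binS bin1 expnS.
have := ltn_expl k (ltnSn 1).
move: IH; set X := 2 ^ k; set C := 'C(k.+1, 2); set Y := S3 k.
lia.
Qed.

Lemma gen_size k : size (gen k) + 2 * k.+1 + 'C(k.+1, 3) = 2 ^ k.+1 + 1.
Proof.
elim: k => [|k IH]; first by [].
rewrite [gen _]/= !size_cat size_map size_fam3.
have h2 := size_fam2 k; have h3 := S3_eq k.
rewrite binS !expnS.
move: IH h2 h3; rewrite expnS.
set X := 2 ^ k; set G := size (gen k); set F := size (fam2 k); set C3 := 'C(k.+1, 3);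
set C2 := 'C(k.+1, 2); set Y := S3 k.
lia.
Qed.

Lemma perm_rcons2 (t u : seq nat) x : perm_eq (rcons t x) (rcons u x) = perm_eq t u.
Proof. by rewrite perm_rcons perm_sym perm_rcons perm_cons perm_sym. Qed.

Lemma count_circ k :
  count (avoids_circ [:: 1; 2; 3; 4]) (circ_perms k.+1) = size (gen k).
Proof.
rewrite /circ_perms -size_filter -(size_map (rcons^~ k.+1) (gen k)).
apply: perm_size; apply: uniq_perm.
- by rewrite !filter_uniq // permutations_uniq.
- by rewrite (map_inj_uniq (@rcons_injl _ _)) uniq_gen.
move=> s; rewrite !mem_filter mem_permutations.
apply/idP/mapP.
  case/and3P => av /eqP ls P.
  case/lastP: s av ls P => [|t x] av ls P; first by move: (perm_size P); rewrite size_iota.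
  rewrite last_rcons in ls; subst x.
  move: P; rewrite iotaSr perm_rcons2 => P.
  exists t => //; apply: gen_complete => //.
  have altN : all (fun x => x < k.+1) t by apply/allP => x; rewrite (perm_mem P) mem_iota; lia.
  move: av; rewrite /avoids_circ => /negP av.
  by split => H; apply: av; apply/(circP altN); [left | right].
case=> t /gen_sound [P [H1 H2]] ->.
rewrite last_rcons eqxx iotaSr perm_rcons2 P !andbT.
have altN : all (fun x => x < k.+1) t by apply/allP => x; rewrite (perm_mem P) mem_iota; lia.
by apply/negP => /(circP altN) [].
Qed.

Import GRing.Theory.

Theorem theorem3 (n : nat) : 0 < n ->
  ((count (avoids_circ [:: 1; 2; 3; 4]%N) (circ_perms n))%:Z
    = (2 ^ n)%:Z + 1 - (2 * n)%:Z - ('C(n, 3))%:Z)%R.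
Proof.
case: n => [|k] // _.
rewrite count_circ.
have h := gen_size k.
move: h; set G := size (gen k); set X := 2 ^ k.+1; set C := 'C(k.+1, 3).
lia.
Qed.
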